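(* Let $G=K_{s_1,s_2,\dots,s_n}$ be a simple complete multipartite graph with $n$ parts and let $q$ be a prime power with $q\ge n-1$. Then $\operatorname{mr}(\mathbb{F}_q,G)\le 3$.
   Context: $K_{s_1,\dots,s_n}$ is the join of independent sets of sizes $s_1,\dots,s_n$ (every two vertices in different parts adjacent, no edges inside a part). For a field $F$ and a simple graph $G$ on vertices $\{1,\dots,n\}$, $S(F,G)$ is the set of symmetric $n\times n$ matrices $A$ over $F$ with $a_{ij}\neq 0$ for $i\ne j$ iff $ij$ is an edge of $G$ (diagonal entries unrestricted), and $\operatorname{mr}(F,G)=\min\{\operatorname{rank}A: A\in S(F,G)\}$. *)

(* Defs.v *)
From HB Require Import structures.
From mathcomp Require Import all_boot all_order all_algebra.
Set Implicit Arguments. Unset Strict Implicit. Unset Printing Implicit Defensive.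
Import GRing.Theory.
Local Open Scope ring_scope.

(* Complete multipartite graph: vertex v lies in part [p v]; two vertices are
   adjacent iff they lie in different parts. *)
Definition multipartite_adj (N n : nat) (p : 'I_N -> 'I_n) : rel 'I_N :=
  fun u v => p u != p v.

Definition inS (F : fieldType) (N : nat) (G : rel 'I_N) (A : 'M[F]_N) : bool :=
  (A^T == A) && [forall i, forall j, (i != j) ==> ((A i j != 0) == G i j)].

(* mr(F,G) = min { rank A : A in S(F,G) }, for a finite field F
   (the min is over a finite, nonempty set when G is a simple graph;
   N = number of vertices is an upper bound for every rank). *)
Definition mr (F : finFieldType) (N : nat) (G : rel 'I_N) : nat :=
  \big[minn/N]_(A : 'M[F]_N | inS G A) \rank A.

(* Main.v *)
Require Import Defs.
From HB Require Import structures.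
From mathcomp Require Import all_boot all_order all_algebra.
Local Open Scope ring_scope.
Import GRing.Theory.

Section Aux.
Variable F : finFieldType.

Definition ev (x : option F) (k : 'I_3) : F :=
  match x with
  | Some a => nth 0 [:: 1; a; a ^+ 2] k
  | None => nth 0 [:: 0; 0; 1] k
  end.
Definition mv (x : option F) (k : 'I_3) : F :=
  match x with
  | Some b => nth 0 [:: b ^+ 2; - (b *+ 2); 1] k
  | None => nth 0 [:: 1; 0; 0] k
  end.
Definition ee (x y : option F) : F := \sum_(k < 3) ev x k * mv y k.

Lemma ee_sym x y : ee x y = ee y x.
Proof.
rewrite /ee !big_ord_recr !big_ord0 /=.
case: x => [a|]; case: y => [b|] /=; rewrite ?mul0r ?mulr0 ?mul1r ?mulr1 ?add0r ?addr0 //.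
have -> : a * (b *- 2) = b * (a *- 2) by rewrite !mulrN !mulrnAr mulrC.
by rewrite addrC -[RHS]addrA [_ + b ^+ 2]addrC.
Qed.

Lemma ee_eq0 x y : (ee x y == 0) = (x == y).
Proof.
rewrite /ee !big_ord_recr !big_ord0 /=.
case: x => [a|]; case: y => [b|] /=; rewrite ?mul0r ?mulr0 ?mul1r ?mulr1 ?add0r ?addr0 ?oner_eq0 ?eqxx //.
have -> : b ^+ 2 + a * - (b *+ 2) + a ^+ 2 = (a - b) ^+ 2.
  rewrite sqrrB mulrN mulrnAr addrC -[RHS]addrA [- _ + b ^+ 2]addrC.
  by rewrite addrA.
by rewrite sqrf_eq0 subr_eq0.
Qed.
End Aux.
Arguments ev {F}.
Arguments mv {F}.
Arguments ee {F}.


Lemma bigminn_le (I : eqType) (r : seq I) (P : pred I) (f : I -> nat) x0 i :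
  i \in r -> P i -> (\big[minn/x0]_(j <- r | P j) f j <= f i)%N.
Proof.
elim: r => // a r IH; rewrite inE big_cons => /orP [/eqP <- -> | ir Pi].
  exact: geq_minl.
case: (P a); last exact: IH.
exact: leq_trans (geq_minr _ _) (IH ir Pi).
Qed.

Theorem mainTheorem18 (F : finFieldType) (n : nat) (s : 'I_n -> nat)
  (hs : forall k, (0 < s k)%N)
  (N : nat) (p : 'I_N -> 'I_n)
  (hp : forall k, #|[set v | p v == k]| = s k)
  (hq : (n.-1 <= #|F|)%N) :
  (mr F (multipartite_adj p) <= 3)%N.
Proof.
pose g (k : 'I_n) : option F := nth None (enum {: option F}) k.
have hsz : (n <= size (enum {: option F}))%N.
  by rewrite -cardE card_option; apply: leq_trans (leqSpred n) _; rewrite ltnS.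
have ginj k l : (g k == g l) = (k == l).
  rewrite /g nth_uniq ?enum_uniq //; by apply: leq_trans hsz.
pose U : 'M[F]_(N, 3) := \matrix_(i, k) ev (g (p i)) k.
pose W : 'M[F]_(3, N) := \matrix_(k, j) mv (g (p j)) k.
have AE i j : (U *m W) i j = ee (g (p i)) (g (p j)).
  by rewrite !mxE; apply: eq_bigr => k _; rewrite !mxE.
have hS : inS (multipartite_adj p) (U *m W).
  apply/andP; split.
    by apply/eqP/matrixP => i j; rewrite mxE !AE ee_sym.
  apply/forallP => i; apply/forallP => j; apply/implyP => _.
  by rewrite AE ee_eq0 ginj /multipartite_adj.
rewrite /mr; have := @bigminn_le _ _ _ (fun A : 'M[F]_N => \rank A) N _ (mem_index_enum (U *m W)) hS.
move=> H; apply: leq_trans H _.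
exact: mulmx_max_rank.
Qed.
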